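(* Let $\mathcal{E}=\{n\ge 1: e(n)=e(n+1)\}$. (1) The set $\mathcal{E}$ is infinite. If $m\in\mathcal{E}$, then $n=4m+1$ satisfies $e(n)=e(n+1)=e(n+2)$. Conversely, if $n\ge 1$ satisfies $e(n)=e(n+1)=e(n+2)$, then $n=4m+1$ for some integer $m\in\mathcal{E}$. (2) There is no integer $n\ge 1$ with $e(n)=e(n+1)=e(n+2)=e(n+3)$.
   Context: The Stern polynomials $B_n(t)\in\mathbb{Z}[t]$, $n\ge 0$, are defined by $B_0(t)=0$, $B_1(t)=1$, $B_{2n}(t)=tB_n(t)$ and $B_{2n+1}(t)=B_n(t)+B_{n+1}(t)$ for $n\ge 1$. For $n\ge 1$, $e(n)=\deg_t B_n(t)$. *)

(* Defs.v *)
From mathcomp Require Import all_boot all_order all_algebra.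
Set Implicit Arguments. Unset Strict Implicit. Unset Printing Implicit Defensive.
Import GRing.Theory.
Local Open Scope ring_scope.

(* Stern polynomials B_n(t) in Z[t], computed with fuel (fuel n suffices). *)
Fixpoint stern_aux (fuel : nat) (n : nat) : {poly int} :=
  match fuel with
  | 0%N => 0
  | k.+1 =>
    if n == 0%N then 0
    else if n == 1%N then 1
    else if ~~ odd n then 'X * stern_aux k n./2
    else stern_aux k n./2 + stern_aux k (n./2).+1
  end.

Definition stern (n : nat) : {poly int} := stern_aux n n.

Lemma stern_spec_check :
  stern 0 = 0 /\ stern 1 = 1.
Proof. by split. Qed.

(* e(n) = deg_t B_n(t) for n >= 1 (size = degree + 1). *)
Definition e (n : nat) : nat := (size (stern n)).-1.

Definition in_Eset (n : nat) : Prop := (1 <= n)%N /\ e n = e n.+1.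

(* Main.v *)
Require Import Defs.
From mathcomp Require Import all_boot all_order all_algebra zify.
Import GRing.Theory.
Local Open Scope ring_scope.

Lemma aux_stable k1 k2 n : (n <= k1)%N -> (n <= k2)%N -> stern_aux k1 n = stern_aux k2 n.
Proof.
elim: k1 k2 n => [|k1 IH] [|k2] n h1 h2 //.
- by have -> : n = 0%N by lia.
- by have -> : n = 0%N by lia.
rewrite /=. have hn := odd_double_half n. rewrite -muln2 in hn.
case: eqP => // n0; case: eqP => // n1.
case: ifP => ho.
- congr (_ * _); apply: IH; move: ho; case: (odd n) hn => /= hn; lia.
- congr (_ + _); apply: IH; move: ho; case: (odd n) hn => /= hn; lia.
Qed.

Lemma auxS k n : stern_aux k.+1 n = if n == 0%N then 0
    else if n == 1%N then 1
    else if ~~ odd n then 'X * stern_aux k n./2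
    else stern_aux k n./2 + stern_aux k (n./2).+1.
Proof. by []. Qed.

Lemma stern_even k : (0 < k)%N -> stern (2 * k) = 'X * stern k.
Proof.
move=> k0; rewrite /stern. have -> : (2 * k = (2 * k).-1.+1)%N by lia.
rewrite auxS.
have -> : (2 * k)%N.-1.+1 = (2 * k)%N by lia.
have -> : (2 * k == 0)%N = false by apply/eqP; lia.
have -> : (2 * k == 1)%N = false by apply/eqP; lia.
rewrite oddM /= mul2n doubleK. congr (_ * _); apply: aux_stable; lia.
Qed.

Lemma stern_odd k : (0 < k)%N -> stern (2 * k + 1) = stern k + stern k.+1.
Proof.
move=> k0. rewrite {1}/stern addn1 auxS.
have -> : ((2 * k).+1 == 0)%N = false by apply/eqP; lia.
have -> : ((2 * k).+1 == 1)%N = false by apply/eqP; lia.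
have -> : odd (2 * k).+1 by rewrite /= oddM.
have -> : ((2 * k).+1)./2 = k by rewrite /= uphalf_half oddM /= mul2n doubleK.
rewrite /stern; congr (_ + _); apply: aux_stable; lia.
Qed.

Definition nonneg (p : {poly int}) := forall i, 0 <= p`_i.

Lemma size_add_nn p q : nonneg p -> nonneg q ->
  size (p + q) = maxn (size p) (size q).
Proof.
wlog: p q / (size q <= size p)%N.
  move=> H hp hq; case: (boolP (size q <= size p)%N) => h; first exact: H h hp hq.
  rewrite addrC maxnC; apply: H => //; by rewrite ltnW // ltnNge.
move=> hqp hp hq; have -> : maxn (size p) (size q) = size p by apply/maxn_idPl.
apply/eqP; rewrite eqn_leq; apply/andP; split.
  by apply: leq_trans (size_add _ _) _; rewrite geq_max leqnn hqp.
case sp: (size p) => [//|s].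
have hl : p`_s != 0.
  have : lead_coef p != 0 by rewrite lead_coef_eq0 -size_poly_eq0 sp.
  by rewrite lead_coefE sp.
have hs : (p + q)`_s != 0.
  rewrite coefD; have := hp s; have := hq s; move: hl; move: (p`_s) (q`_s) => a b; lia.
rewrite ltnNge; apply/negP => hle; move: hs; by rewrite nth_default ?eqxx.
Qed.

Lemma stern_props n : (0 < n)%N -> nonneg (stern n) /\ (0 < size (stern n))%N.
Proof.
elim/ltn_ind: n => n IH n0.
have := odd_double_half n; rewrite -muln2 => hn.
case: (boolP (odd n)) => ho; [rewrite ho in hn | rewrite (negbTE ho) in hn].
- case: (ltnP 1 n) => n1; last first.
    have -> : n = 1%N by lia.
    by split; [move=> i; rewrite /stern /= coefC; case: (i == 0%N) | rewrite size_poly1].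
  have -> : n = (2 * n./2 + 1)%N by lia.
  rewrite stern_odd; last by lia.
  have [h1 s1] := IH n./2 ltac:(lia) ltac:(lia).
  have [h2 s2] := IH n./2.+1 ltac:(lia) ltac:(lia).
  rewrite size_add_nn //; split; last by lia.
  by move=> i; rewrite coefD; have := h1 i; have := h2 i; lia.
- have -> : n = (2 * n./2)%N by lia.
  rewrite stern_even; last by lia.
  have [h1 s1] := IH n./2 ltac:(lia) ltac:(lia).
  split; first by move=> i; rewrite coefXM; case: (i == 0%N).
  rewrite mulrC size_mulX // -size_poly_eq0; lia.
Qed.

Lemma e_even k : (0 < k)%N -> e (2 * k) = (e k).+1.
Proof.
move=> k0; rewrite /e stern_even // mulrC size_mulX.
  by have := (@stern_props k k0).2; lia.
by rewrite -size_poly_eq0; have := (@stern_props k k0).2; lia.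
Qed.

Lemma e_odd k : (0 < k)%N -> e (2 * k + 1) = maxn (e k) (e k.+1).
Proof.
move=> k0; rewrite /e stern_odd //.
have [h1 s1] := @stern_props k k0.
have [h2 s2] := @stern_props k.+1 (ltn0Sn k).
rewrite size_add_nn //; lia.
Qed.

Lemma e1 : e 1 = 0%N. Proof. by rewrite /e /stern /= size_poly1. Qed.
Lemma e2 : e 2 = 1%N. Proof. by rewrite -[2%N]/(2*1)%N e_even // e1. Qed.

Lemma e_bound k : (0 < k)%N -> (e k <= (e k.+1).+1)%N /\ (e k.+1 <= (e k).+1)%N.
Proof.
elim/ltn_ind: k => k IH k0.
have := odd_double_half k; rewrite -muln2 => hn.
case: (boolP (odd k)) => ho; [rewrite ho in hn | rewrite (negbTE ho) in hn].
- case: (ltnP 1 k) => k1.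
    set j := k./2. have j0 : (0 < j)%N by lia.
    have [b1 b2] := IH j ltac:(lia) j0.
    have -> : k = (2 * j + 1)%N by lia.
    have -> : (2 * j + 1).+1 = (2 * j.+1)%N by lia.
    rewrite e_odd // e_even //; lia.
  have -> : k = 1%N by lia. by rewrite e1 e2.
- set j := k./2. have j0 : (0 < j)%N by lia.
  have [b1 b2] := IH j ltac:(lia) j0.
  have -> : k = (2 * j)%N by lia.
  have -> : (2 * j).+1 = (2 * j + 1)%N by lia.
  rewrite e_odd // e_even //; lia.
Qed.

Lemma conv n : (1 <= n)%N -> e n = e n.+1 -> e n.+1 = e n.+2 ->
     exists m : nat, n = (4 * m + 1)%N /\ in_Eset m.
Proof.
move=> n1 h1 h2.
have := odd_double_half n; rewrite -muln2 => hn.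
case: (boolP (odd n)) => ho; [rewrite ho in hn | rewrite (negbTE ho) in hn].
- case: (ltnP 1 n) => nn1; last first.
    have ee : n = 1%N by lia. by move: h1; rewrite ee e1 e2.
  set k := n./2. have k0 : (0 < k)%N by lia.
  have hk1 : (k.+1 <= n.-1)%N by lia.
  have := odd_double_half k; rewrite -muln2 => hk.
  have E1 : e n = maxn (e k) (e k.+1) by rewrite -e_odd //; congr e; lia.
  have E2 : e n.+1 = (e k.+1).+1 by rewrite -e_even //; congr e; lia.
  case: (boolP (odd k)) => hok; [rewrite hok in hk | rewrite (negbTE hok) in hk].
  + (* contradiction: e(k+1) >= e k *)
    case: (ltnP 1 k) => k1; last first.
      have ek : k = 1%N by lia. move: h1; rewrite E1 E2 ek e1 e2; lia.
    set j := k./2. have j0 : (0 < j)%N by lia.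
    have [b1 b2] := @e_bound j j0.
    have F1 : e k = maxn (e j) (e j.+1) by rewrite -e_odd //; congr e; lia.
    have F2 : e k.+1 = (e j.+1).+1 by rewrite -e_even //; congr e; lia.
    lia.
  + set m := k./2. have m0 : (0 < m)%N by lia.
    have [b1 b2] := @e_bound m m0.
    exists m; split; first by lia.
    split; first by lia.
    have F1 : e k = (e m).+1 by rewrite -e_even //; congr e; lia.
    have F2 : e k.+1 = maxn (e m) (e m.+1) by rewrite -e_odd //; congr e; lia.
    have F3 : e n.+2 = maxn (e k.+1) (e k.+2) by rewrite -e_odd //; congr e; lia.
    have F4 : e k.+2 = (e m.+1).+1 by rewrite -e_even //; congr e; lia.
    lia.
- set k := n./2. have k0 : (0 < k)%N by lia.
  have E1 : e n = (e k).+1 by rewrite -e_even //; congr e; lia.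
  have E2 : e n.+1 = maxn (e k) (e k.+1) by rewrite -e_odd //; congr e; lia.
  have E3 : e n.+2 = (e k.+1).+1 by rewrite -e_even //; congr e; lia.
  lia.
Qed.

Theorem theorem4p6 :
  (* (1a) E is infinite *)
  (forall N : nat, exists m : nat, (N <= m)%N /\ in_Eset m) /\
  (* (1b) m in E  ->  n = 4m+1 has e(n) = e(n+1) = e(n+2) *)
  (forall m : nat, in_Eset m ->
     e (4 * m + 1) = e (4 * m + 2) /\ e (4 * m + 2) = e (4 * m + 3)) /\
  (* (1c) converse *)
  (forall n : nat, (1 <= n)%N -> e n = e n.+1 -> e n.+1 = e n.+2 ->
     exists m : nat, n = (4 * m + 1)%N /\ in_Eset m) /\
  (* (2) no four consecutive equal degrees *)
  (forall n : nat, (1 <= n)%N ->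
     ~ (e n = e n.+1 /\ e n.+1 = e n.+2 /\ e n.+2 = e n.+3)).
Proof.
have B : forall m, in_Eset m ->
     e (4 * m + 1) = e (4 * m + 2) /\ e (4 * m + 2) = e (4 * m + 3).
  move=> m [m0 hm].
  have [b1 b2] := @e_bound m m0.
  have F1 : e (2 * m) = (e m).+1 by rewrite e_even.
  have F2 : e (2 * m + 1) = maxn (e m) (e m.+1) by rewrite e_odd.
  have F4 : e (2 * m.+1) = (e m.+1).+1 by rewrite e_even.
  have G1 : e (4 * m + 1) = maxn (e (2 * m)) (e (2 * m).+1).
    by rewrite -e_odd; [congr e; lia | lia].
  have G2 : e (4 * m + 2) = (e (2 * m + 1)).+1.
    by rewrite -e_even; [congr e; lia | lia].
  have G3 : e (4 * m + 3) = maxn (e (2 * m + 1)) (e (2 * m + 1).+1).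
    by rewrite -e_odd; [congr e; lia | lia].
  rewrite (_ : (2 * m).+1 = (2 * m + 1)%N) in G1; last lia.
  rewrite (_ : (2 * m + 1).+1 = (2 * m.+1)%N) in G3; last lia.
  lia.
split; last split => //; last split; first last.
- move=> n n1 [h1 [h2 h3]].
  have [m [hm _]] := conv n n1 h1 h2.
  have [m' [hm' _]] := conv n.+1 (ltn0Sn n) h2 h3.
  lia.
- exact: conv.
elim=> [|N [m [hN hm]]].
  by exists 2%N; split => //; split => //; rewrite e2 -[3%N]/(2 * 1 + 1)%N e_odd // e1 e2.
exists (4 * m + 1)%N; split; first lia.
have [h1 h2] := B m hm.
split; first lia. by rewrite h1; congr e; lia.
Qed.
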